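(* The class $\mathcal U_{\mathrm{fin}}$ of all finite two-sorted ultrametric spaces, with dc-embeddings as morphisms, is a Fraïssé class: it is nonempty, has only countably many dc-isomorphism types, and has the joint embedding property and the amalgamation property. Its Fraïssé limit $\mathbb U$ is dc-isomorphic to $\mathbb U_{\mathbb Q}$, the countable rational Urysohn ultrametric space viewed as a two-sorted space with distance set $\mathbb Q_{\ge 0}$. In particular, $\mathbb U$ is both dc-homogeneous and iso-homogeneous.
   Context: A two-sorted ultrametric space is a triple $(X,d_X,D_X)$ where $D_X$ is a linearly ordered set with least element $0$ (the distance set), $X$ is a set of points, and $d_X\colon X\times X\to D_X$ satisfies $d_X(x,y)=d_X(y,x)$, $d_X(x,y)=0\iff x=y$, and $d_X(x,z)\le \max\{d_X(x,y),d_X(y,z)\}$. It is finite (resp. countable) if both $X$ and $D_X$ are finite (resp. countable). A dc-embedding $f\colon (X,d_X,D_X)\to (Y,d_Y,D_Y)$ is an injective map $f\colon X\to Y$ together with an order embedding $D_f\colon D_X\to D_Y$ with $D_f(0)=0$ such that $d_Y(f(x),f(x'))=D_f(d_X(x,x'))$ for all $x,x'\in X$. A dc-isomorphism is a dc-embedding that is bijective in both sorts. It is an isometric embedding if $D_X\subseteq D_Y$ and $D_f$ is the inclusion; an isometry is a dc-isomorphism with $D_X=D_Y$ and $D_f$ the identity. $A$ is a substructure of $X$ if $A\subseteq X$, $D_A\subseteq D_X$ and the inclusion is a dc-embedding. Joint embedding property: any two objects dc-embed into a common one. Amalgamation property: for all dc-embeddings $\alpha_1\colon A\to B$, $\alpha_2\colon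 A\to C$ of finite spaces there are a finite $D$ and dc-embeddings $\beta_1\colon B\to D$, $\beta_2\colon C\to D$ with $\beta_1\circ\alpha_1=\beta_2\circ\alpha_2$. The Fraïssé limit of the class is the (unique up to dc-isomorphism) countable two-sorted ultrametric space that is the union of an increasing chain of finite substructures, into which every finite space dc-embeds, and in which every dc-isomorphism between finite substructures extends to a dc-automorphism. A space $X$ is dc-homogeneous if every dc-isomorphism between finite substructures of $X$ extends to a dc-automorphism of $X$; it is iso-homogeneous if every isometry between finite substructures of $X$ extends to an isometry of $X$. $\mathbb U_{\mathbb Q}$ is the unique (up to isometry) countable ultrametric space with all distances in $\mathbb Q_{\ge0}$ into which every finite ultrametric space with rational distances embeds isometrically and in which every isometry between finite subsets extends to an isometry of the whole space. *)

(* Defs.v *)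
From mathcomp Require Import all_boot all_order all_algebra.
From Stdlib Require List.
Import Order.TTheory GRing.Theory Num.Theory.

Record tsu := TSU {
  pts : Type;
  dst : Type;
  dle : dst -> dst -> Prop;
  dzero : dst;
  dist : pts -> pts -> dst;
  dle_refl : forall a, dle a a;
  dle_antisym : forall a b, dle a b -> dle b a -> a = b;
  dle_trans : forall a b c, dle a b -> dle b c -> dle a c;
  dle_total : forall a b, dle a b \/ dle b a;
  dzero_least : forall a, dle dzero a;
  dist_sym : forall x y, dist x y = dist y x;
  dist_zero : forall x y, dist x y = dzero <-> x = y;
  dist_ultra : forall x y z,
      dle (dist x z) (dist x y) \/ dle (dist x z) (dist y z)
}.

Definition fin_type (T : Type) : Prop := exists l : list T, forall x, List.In x l.
Definition count_type (T : Type) : Prop :=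
  exists f : T -> nat, forall x y, f x = f y -> x = y.
Definition fin_pred {T : Type} (P : T -> Prop) : Prop :=
  exists l : list T, forall x, P x -> List.In x l.

Definition finite_tsu (X : tsu) : Prop := fin_type (pts X) /\ fin_type (dst X).
Definition countable_tsu (X : tsu) : Prop :=
  count_type (pts X) /\ count_type (dst X).

Definition order_emb (X Y : tsu) (g : dst X -> dst Y) : Prop :=
  forall a b, dle X a b <-> dle Y (g a) (g b).

Definition dc_emb (X Y : tsu) (f : pts X -> pts Y) (g : dst X -> dst Y) : Prop :=
  (forall x x', f x = f x' -> x = x') /\ order_emb X Y g /\
  g (dzero X) = dzero Y /\
  (forall x x', dist Y (f x) (f x') = g (dist X x x')).

Definition dc_iso (X Y : tsu) (f : pts X -> pts Y) (g : dst X -> dst Y) : Prop :=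
  dc_emb X Y f g /\ bijective f /\ bijective g.

Definition dc_embeds (X Y : tsu) : Prop := exists f g, dc_emb X Y f g.
Definition dc_isomorphic (X Y : tsu) : Prop := exists f g, dc_iso X Y f g.

Definition JEP_fin : Prop :=
  forall A B : tsu, finite_tsu A -> finite_tsu B ->
    exists C : tsu, finite_tsu C /\ dc_embeds A C /\ dc_embeds B C.

Definition AP_fin : Prop :=
  forall (A B C : tsu), finite_tsu A -> finite_tsu B -> finite_tsu C ->
  forall (a1 : pts A -> pts B) (g1 : dst A -> dst B)
         (a2 : pts A -> pts C) (g2 : dst A -> dst C),
    dc_emb A B a1 g1 -> dc_emb A C a2 g2 ->
    exists (D : tsu) (b1 : pts B -> pts D) (h1 : dst B -> dst D)
           (b2 : pts C -> pts D) (h2 : dst C -> dst D),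
      finite_tsu D /\ dc_emb B D b1 h1 /\ dc_emb C D b2 h2 /\
      (forall x, b1 (a1 x) = b2 (a2 x)) /\ (forall d, h1 (g1 d) = h2 (g2 d)).

Definition substr (X : tsu) (P : pts X -> Prop) (E : dst X -> Prop) : Prop :=
  E (dzero X) /\ (forall x y, P x -> P y -> E (dist X x y)).

Definition fin_substr (X : tsu) (P : pts X -> Prop) (E : dst X -> Prop) : Prop :=
  substr X P E /\ fin_pred P /\ fin_pred E.

Definition sub_dc_iso (X : tsu) (P : pts X -> Prop) (E : dst X -> Prop)
    (Q : pts X -> Prop) (F : dst X -> Prop)
    (f : pts X -> pts X) (g : dst X -> dst X) : Prop :=
  (forall x, P x -> Q (f x)) /\
  (forall x x', P x -> P x' -> f x = f x' -> x = x') /\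
  (forall y, Q y -> exists x, P x /\ f x = y) /\
  (forall a, E a -> F (g a)) /\
  (forall b, F b -> exists a, E a /\ g a = b) /\
  (forall a b, E a -> E b -> (dle X a b <-> dle X (g a) (g b))) /\
  g (dzero X) = dzero X /\
  (forall x x', P x -> P x' -> dist X (f x) (f x') = g (dist X x x')).

Definition dc_homogeneous (X : tsu) : Prop :=
  forall P E Q F f g,
    fin_substr X P E -> fin_substr X Q F -> sub_dc_iso X P E Q F f g ->
    exists phi psi, dc_iso X X phi psi /\
      (forall x, P x -> phi x = f x) /\ (forall a, E a -> psi a = g a).

(* isometries: same distance set, identity on distances *)
Definition iso_homogeneous (X : tsu) : Prop :=
  forall P Q E f,
    fin_substr X P E -> fin_substr X Q E ->
    sub_dc_iso X P E Q E f (fun a => a) ->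
    exists phi, dc_iso X X phi (fun a => a) /\ (forall x, P x -> phi x = f x).

Definition is_fraisse_limit (U : tsu) : Prop :=
  countable_tsu U /\
  (exists (A : nat -> pts U -> Prop) (E : nat -> dst U -> Prop),
     (forall n, fin_substr U (A n) (E n)) /\
     (forall n x, A n x -> A n.+1 x) /\ (forall n a, E n a -> E n.+1 a) /\
     (forall x, exists n, A n x) /\ (forall a, exists n, E n a)) /\
  (forall B : tsu, finite_tsu B -> dc_embeds B U) /\
  dc_homogeneous U.

Local Open Scope ring_scope.

Record rum_axioms (Y : Type) (d : Y -> Y -> rat) : Prop := {
  rum_ge0 : forall x y, 0 <= d x y;
  rum_sym : forall x y, d x y = d y x;
  rum_zero : forall x y, d x y = 0 <-> x = y;
  rum_ultra : forall x y z, d x z <= Num.max (d x y) (d y z)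
}.
Arguments rum_axioms {Y} d.
Arguments rum_ge0 {Y d}.
Arguments rum_sym {Y d}.
Arguments rum_zero {Y d}.
Arguments rum_ultra {Y d}.

Definition is_UQ (Y : Type) (d : Y -> Y -> rat) : Prop :=
  rum_axioms d /\ count_type Y /\
  (forall (Z : Type) (dZ : Z -> Z -> rat), fin_type Z -> rum_axioms dZ ->
     exists f : Z -> Y, forall z z', d (f z) (f z') = dZ z z') /\
  (forall (P Q : Y -> Prop) (f : Y -> Y), fin_pred P -> fin_pred Q ->
     (forall x, P x -> Q (f x)) ->
     (forall x x', P x -> P x' -> f x = f x' -> x = x') ->
     (forall y, Q y -> exists x, P x /\ f x = y) ->
     (forall x x', P x -> P x' -> d (f x) (f x') = d x x') ->
     exists phi : Y -> Y, bijective phi /\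
       (forall x y, d (phi x) (phi y) = d x y) /\
       (forall x, P x -> phi x = f x)).

Definition qnn := {q : rat | 0 <= q}.
Definition qnn_le (a b : qnn) : Prop := sval a <= sval b.
Definition qnn0 : qnn := exist _ 0 (lexx (0 : rat)).

Section TsuOfRum.
Variables (Y : Type) (d : Y -> Y -> rat) (H : rum_axioms d).

Definition rum_dist (x y : Y) : qnn := exist _ (d x y) (rum_ge0 H x y).

Lemma qnn_refl (a : qnn) : qnn_le a a.
Proof. exact: lexx. Qed.

Lemma qnn_anti (a b : qnn) : qnn_le a b -> qnn_le b a -> a = b.
Proof.
move=> h1 h2; apply: val_inj; apply/eqP; rewrite eq_le.
by rewrite /qnn_le in h1 h2; rewrite h1 h2.
Qed.

Lemma qnn_trans (a b c : qnn) : qnn_le a b -> qnn_le b c -> qnn_le a c.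
Proof. exact: le_trans. Qed.

Lemma qnn_total (a b : qnn) : qnn_le a b \/ qnn_le b a.
Proof. rewrite /qnn_le; case/orP: (le_total (sval a) (sval b)) => h; [left|right]; exact: h. Qed.

Lemma qnn0_least (a : qnn) : qnn_le qnn0 a.
Proof. by case: a. Qed.

Lemma rum_dist_sym x y : rum_dist x y = rum_dist y x.
Proof. by apply: val_inj; rewrite /= (rum_sym H). Qed.

Lemma rum_dist_zero x y : rum_dist x y = qnn0 <-> x = y.
Proof.
split.
- move=> h; apply/(rum_zero H); exact: (f_equal sval h).
- by move=> h; apply: val_inj => /=; apply/(rum_zero H).
Qed.

Lemma rum_dist_ultra x y z :
  qnn_le (rum_dist x z) (rum_dist x y) \/ qnn_le (rum_dist x z) (rum_dist y z).
Proof.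
rewrite /qnn_le /=; have := rum_ultra H x y z.
case: (leP (d x y) (d y z)) => _ h; [right|left]; exact: h.
Qed.

Definition tsu_of_rum : tsu :=
  @TSU Y qnn qnn_le qnn0 rum_dist qnn_refl qnn_anti qnn_trans qnn_total
       qnn0_least rum_dist_sym rum_dist_zero rum_dist_ultra.
End TsuOfRum.
Arguments is_UQ {Y} d.
Arguments tsu_of_rum {Y d} H.

(* Main.v *)
Require Import Defs.
From mathcomp Require Import all_boot all_order all_algebra.
From Stdlib Require Import ClassicalEpsilon ProofIrrelevance.
From mathcomp Require Import lra.
Import Order.TTheory GRing.Theory Num.Theory.
Set Implicit Arguments. Unset Strict Implicit. Unset Printing Implicit Defensive.

Definition cid := constructive_indefinite_description.

Definition good {X Y : Type} (R : X*Y -> X*Y -> Prop) (L : list (X*Y)) :=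
  forall p q, List.In p L -> List.In q L -> R p q.

Lemma good_nil {X Y : Type} (R : X*Y -> X*Y -> Prop) : good R [::].
Proof. by move=> p q []. Qed.

Lemma good_cons_in {X Y : Type} (R : X*Y -> X*Y -> Prop) p L :
  List.In p L -> good R L -> good R (p::L).
Proof. move=> hp hg q r /= [<-|hq] [<-|hr]; apply hg; auto. Qed.

Section BF.
Variables (X Y : Type) (R : X*Y -> X*Y -> Prop).
Hypothesis Rinj : forall x y x' y', R (x,y) (x',y') -> (x = x' <-> y = y').
Hypothesis forth : forall L x, good R L -> exists y, good R ((x,y)::L).

Lemma forth' L x : exists y, good R L -> good R ((x,y)::L).
Proof.
case: (classic (good R L)) => h.
- by case: (forth x h) => y hy; exists y.
- by case: (forth x (good_nil R)) => y _; exists y.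
Qed.

Definition ff L x := proj1_sig (cid (forth' L x)).
Lemma ffP L x : good R L -> good R ((x, ff L x)::L).
Proof. exact: (proj2_sig (cid (forth' L x))). Qed.

Lemma fo_main (lX : list X) (cov : forall x, List.In x lX) L0 :
  good R L0 -> exists phi : X -> Y, (forall x x', R (x,phi x) (x', phi x')) /\
     (forall x y, List.In (x,y) L0 -> phi x = y).
Proof.
move=> g0.
have: forall l : list X, exists L, good R L /\ (forall p, List.In p L0 -> List.In p L) /\
   forall x, List.In x l -> exists y, List.In (x,y) L.
  elim=> [|x l [L [gL [sL cL]]]].
    by exists L0; split=> //; split=> // x [].
  case: (forth x gL) => y gy; exists ((x,y)::L); split=> //; split.
    by move=> p /sL hp; right.
  move=> x' /= [<-|hx]; first by exists y; left.
  by case: (cL _ hx) => y' hy'; exists y'; right.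
move=> /(_ lX) [L [gL [sL cL]]].
pose phi x := proj1_sig (cid (cL x (cov x))).
have phiP x : List.In (x, phi x) L by exact: (proj2_sig (cid (cL x (cov x)))).
exists phi; split; first by move=> x x'; apply: gL.
move=> x y /sL hxy; symmetry; have := gL _ _ hxy (phiP x).
by move=> /Rinj [h _]; apply: h.
Qed.

Hypothesis back : forall L y, good R L -> exists x, good R ((x,y)::L).
Variables (eX : X -> nat) (eY : Y -> nat).
Hypothesis eXi : forall x x', eX x = eX x' -> x = x'.
Hypothesis eYi : forall y y', eY y = eY y' -> y = y'.

Lemma back' L y : exists x, good R L -> good R ((x,y)::L).
Proof.
case: (classic (good R L)) => h.
- by case: (back y h) => x hx; exists x.
- by case: (back y (good_nil R)) => x _; exists x.
Qed.
Definition fb L y := proj1_sig (cid (back' L y)).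
Lemma fbP L y : good R L -> good R ((fb L y, y)::L).
Proof. exact: (proj2_sig (cid (back' L y))). Qed.

Definition pickX k : option X :=
  match excluded_middle_informative (exists x, eX x = k) with
  | left h => Some (proj1_sig (cid h)) | right _ => None end.
Definition pickY k : option Y :=
  match excluded_middle_informative (exists y, eY y = k) with
  | left h => Some (proj1_sig (cid h)) | right _ => None end.
Lemma pickXP x : pickX (eX x) = Some x.
Proof.
rewrite /pickX; case: excluded_middle_informative => [h|h]; last by exfalso; apply: h; exists x.
by congr Some; apply: eXi; exact: (proj2_sig (cid h)).
Qed.
Lemma pickYP y : pickY (eY y) = Some y.
Proof.
rewrite /pickY; case: excluded_middle_informative => [h|h]; last by exfalso; apply: h; exists y.
by congr Some; apply: eYi; exact: (proj2_sig (cid h)).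
Qed.

Definition step n L :=
  if odd n then (if pickY n./2 is Some y then (fb L y, y)::L else L)
  else (if pickX n./2 is Some x then (x, ff L x)::L else L).

Variable L0 : list (X*Y).
Hypothesis g0 : good R L0.

Fixpoint Ls n := match n with 0 => L0 | n'.+1 => step n' (Ls n') end.

Lemma Ls_good n : good R (Ls n).
Proof.
elim: n => [|n IH] //=; rewrite /step; case: (odd n).
- by case: (pickY _) => // y; apply: fbP.
- by case: (pickX _) => // x; apply: ffP.
Qed.

Lemma step_sub n L p : List.In p L -> List.In p (step n L).
Proof.
rewrite /step; case: (odd n); [case: (pickY _) | case: (pickX _)] => //= *; by right.
Qed.

Lemma Ls_mono n m p : (n <= m)%N -> List.In p (Ls n) -> List.In p (Ls m).
Proof.
move=> /subnKC <-; elim: (m - n)%N => [|k IH]; first by rewrite addn0.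
by move=> h; rewrite addnS /=; apply: step_sub; apply: IH.
Qed.

Lemma Ls_R n m p q : List.In p (Ls n) -> List.In q (Ls m) -> R p q.
Proof.
move=> hp hq; apply: (Ls_good (n := maxn n m)).
- by apply: (Ls_mono _ hp); rewrite leq_maxl.
- by apply: (Ls_mono _ hq); rewrite leq_maxr.
Qed.

Definition phiB x := ff (Ls (eX x).*2) x.
Lemma phiB_in x : List.In (x, phiB x) (Ls (eX x).*2.+1).
Proof. by rewrite /= /step odd_double doubleK pickXP /=; left. Qed.
Definition psiB y := fb (Ls (eY y).*2.+1) y.
Lemma psiB_in y : List.In (psiB y, y) (Ls (eY y).*2.+2).
Proof. rewrite [Ls _]/= {1}/step /= odd_double /= uphalf_double pickYP /=; by left. Qed.

Lemma bf_main : exists phi : X -> Y, bijective phi /\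
  (forall x x', R (x, phi x) (x', phi x')) /\
  (forall x y, List.In (x,y) L0 -> phi x = y).
Proof.
exists phiB; split; last split.
- exists psiB.
  + move=> x; have := Ls_R (psiB_in (phiB x)) (phiB_in x).
    by move=> /Rinj [_ h]; apply: h.
  + move=> y; have := Ls_R (psiB_in y) (phiB_in (psiB y)).
    by move=> /Rinj [h _]; symmetry; apply: h.
- by move=> x x'; apply: (Ls_R (phiB_in x) (phiB_in x')).
- move=> x y hxy; have := Ls_R (n := 0) hxy (phiB_in x).
  by move=> /Rinj [h _]; symmetry; apply: h.
Qed.
End BF.

Lemma good_cons {X Y : Type} (R : X*Y -> X*Y -> Prop) p L :
  R p p -> (forall q, List.In q L -> R p q /\ R q p) -> good R L -> good R (p::L).
Proof.
move=> hpp hq hg q r /= [<-|hq'] [<-|hr] //.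
- exact: (proj1 (hq _ hr)).
- exact: (proj2 (hq _ hq')).
- exact: hg.
Qed.

Definition swp {X Y : Type} (p : X*Y) : Y*X := (p.2, p.1).

Lemma good_swap {X Y : Type} (R : X*Y -> X*Y -> Prop) (R' : Y*X -> Y*X -> Prop) L :
  (forall p q, R' (swp p) (swp q) -> R p q) -> good R' (List.map swp L) -> good R L.
Proof.
move=> h g p q hp hq; apply: h; apply: g; exact: List.in_map.
Qed.

Definition partner {X Y : Type} (L : list (X*Y)) (x0 : X) (y : Y) : X :=
  match excluded_middle_informative (exists x, List.In (x,y) L) with
  | left h => proj1_sig (cid h) | right _ => x0 end.

Lemma partnerP {X Y : Type} (R : X*Y -> X*Y -> Prop)
  (Rinj : forall x y x' y', R (x,y) (x',y') -> (x = x' <-> y = y'))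
  L x0 x y : good R L -> List.In (x,y) L -> partner L x0 y = x.
Proof.
move=> g hin; rewrite /partner; case: excluded_middle_informative => [h|h]; last first.
  by exfalso; apply: h; exists x.
have := proj2_sig (cid h); set x' := proj1_sig _ => hx'.
by have := g _ _ hx' hin => /Rinj [_ ->].
Qed.

Lemma le0 (X : tsu) a : dle X a (dzero X) <-> a = dzero X.
Proof.
split=> [h|->]; last exact: dle_refl.
by apply: dle_antisym => //; apply: dzero_least.
Qed.

Lemma oemb_inj (U V : tsu) g : order_emb U V g -> forall a b, g a = g b -> a = b.
Proof.
move=> hg a b e; apply: dle_antisym; apply/hg; rewrite e; exact: dle_refl.
Qed.

Definition Rord (U V : tsu) (p q : dst U * dst V) :=
  (dle U p.1 q.1 <-> dle V p.2 q.2) /\ (dle U q.1 p.1 <-> dle V q.2 p.2) /\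
  (p.1 = dzero U <-> p.2 = dzero V).

Lemma Rord_inj U V a b a' b' : @Rord U V (a,b) (a',b') -> (a = a' <-> b = b').
Proof.
move=> [h1 [h2 _]] /=; split=> e.
- by apply: dle_antisym; [apply/h1|apply/h2]; rewrite e; apply: dle_refl.
- by apply: dle_antisym; [apply/h1|apply/h2]; rewrite e; apply: dle_refl.
Qed.

Definition OEXT (V : tsu) := forall (es : list (dst V)) (c : dst V -> Prop),
  List.In (dzero V) es -> c (dzero V) ->
  (forall a a', List.In a es -> List.In a' es -> dle V a' a -> c a -> c a') ->
  exists b, forall a, List.In a es -> (dle V a b <-> c a) /\ (dle V b a <-> ~ c a).

Definition PEXT (V : tsu) := forall (ys : list (pts V)) (r : pts V -> dst V),
  (forall y, List.In y ys -> r y <> dzero V) ->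
  (forall y y', List.In y ys -> List.In y' ys ->
     (dle V (dist V y y') (r y) \/ dle V (dist V y y') (r y')) /\
     (dle V (r y) (dist V y y') \/ dle V (r y) (r y'))) ->
  exists z, forall y, List.In y ys -> dist V z y = r y.

Lemma ord_forth (U V : tsu) : OEXT V -> forall L a, good (@Rord U V) L ->
  exists b, good (@Rord U V) ((a,b)::L).
Proof.
move=> hV L a g.
case: (classic (exists b0, List.In (a,b0) L)) => [[b0 hb0]|hdom].
  by exists b0; apply: good_cons_in.
case: (classic (a = dzero U)) => [ha0|ha0].
  subst a; exists (dzero V); apply: good_cons => //.
    by rewrite /Rord /=; split; [|split]; split=> _ //; apply: dle_refl.
  move=> [a' b'] hq; have [_ [_ z']] := g _ _ hq hq; move: z' => /= z'.
  have e: dle U a' (dzero U) <-> dle V b' (dzero V).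
    by rewrite !le0.
  split; (split; [|split]) => /=; try exact: e; try exact: z';
    by split=> _ //; apply: dzero_least.
pose c b := b = dzero V \/ exists a', List.In (a',b) L /\ dle U a' a.
have hcons : forall x x', List.In x (dzero V :: List.map snd L) ->
    List.In x' (dzero V :: List.map snd L) -> dle V x' x -> c x -> c x'.
  move=> x x' hx hx' hle [e|[a'' [hin hle']]].
    by left; apply/le0; rewrite -e.
  case: hx' => [<-|]; first by left.
  move=> /List.in_map_iff [[a1 b1] [/= e1 hin1]]; subst x'.
  right; exists a1; split=> //; apply: dle_trans hle'.
  by have [h1 _] := g _ _ hin1 hin; apply/h1.
have [b hb] := hV (dzero V :: List.map snd L) c (or_introl erefl) (or_introl erefl) hcons.
have hb0 : b <> dzero V.
  move=> e; have [_ h2] := hb _ (or_introl erefl).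
  by apply: (proj1 h2); [rewrite e; apply: dle_refl | left].
have hc q : List.In q L -> (c q.2 <-> dle U q.1 a).
  case: q => a' b' hq /=; split.
  - case=> [e|[a'' [hin hle]]].
      have [_ [_ z']] := g _ _ hq hq; move: z' => /= z'; rewrite (proj2 z' e); exact: dzero_least.
    have := Rord_inj (g _ _ hq hin) => /proj2 /(_ erefl) ->; exact: hle.
  - by move=> h; right; exists a'; split.
exists b; apply: good_cons.
  by rewrite /Rord /=; split; [|split]; split=> // _; apply: dle_refl.
move=> q hq; have hqb := hb _ (or_intror (List.in_map _ _ _ hq)).
have hneq : q.1 <> a by move=> e; apply: hdom; exists q.2; rewrite -e -surjective_pairing.
have tot : dle U a q.1 <-> ~ dle U q.1 a.
  split=> [h1 h2|h]; first by apply: hneq; apply: dle_antisym.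
  by case: (dle_total U a q.1) => // /h.
rewrite /Rord /=; split; (split; [|split]).
- by rewrite tot (proj2 hqb) (hc _ hq).
- by rewrite (proj1 hqb) (hc _ hq).
- by split=> e; exfalso; [apply: ha0|apply: hb0].
- by rewrite (proj1 hqb) (hc _ hq).
- by rewrite tot (proj2 hqb) (hc _ hq).
- by have [_ [_ z']] := g _ _ hq hq.
exact: g.
Qed.

Definition Rpt (U V : tsu) (psi : dst U -> dst V) (p q : pts U * pts V) :=
  dist V p.2 q.2 = psi (dist U p.1 q.1).

Lemma Rpt_inj (U V : tsu) psi : order_emb U V psi -> psi (dzero U) = dzero V ->
  forall x y x' y', Rpt psi (x,y) (x',y') -> (x = x' <-> y = y').
Proof.
move=> ho h0 x y x' y'; rewrite /Rpt /= => e; split=> e'.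
- by apply/(dist_zero V); rewrite e e' (proj2 (dist_zero U _ _) erefl).
- apply/(dist_zero U); apply: (oemb_inj ho); rewrite h0 -e; exact/(dist_zero V).
Qed.

Lemma pt_forth (U V : tsu) psi : order_emb U V psi -> psi (dzero U) = dzero V ->
  PEXT V -> forall L x, good (Rpt psi) L -> exists y, good (Rpt psi) ((x,y)::L).
Proof.
move=> ho h0 hV L x g.
have Rinj := Rpt_inj ho h0.
case: (classic (exists y0, List.In (x,y0) L)) => [[y0 hy0]|hdom].
  by exists y0; apply: good_cons_in.
pose r y := psi (dist U x (partner L x y)).
have hr x' y : List.In (x',y) L -> r y = psi (dist U x x').
  by move=> h; rewrite /r (partnerP Rinj x g h).
have hys y : List.In y (List.map snd L) -> exists x', List.In (x',y) L.
  by move=> /List.in_map_iff [[x' y'] [/= <- h]]; exists x'.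
have [z hz] : exists z, forall y, List.In y (List.map snd L) -> dist V z y = r y.
  apply: hV.
- move=> y /hys [x' hx'] e; apply: hdom; exists y.
  move: e; rewrite (hr _ _ hx') -h0 => /(oemb_inj ho) /(dist_zero U) ->; exact: hx'.
- move=> y y' /hys [x1 h1] /hys [x2 h2]; rewrite (hr _ _ h1) (hr _ _ h2).
  rewrite (g _ _ h1 h2) /=; split.
  + case: (dist_ultra U x1 x x2) => h; [left|right]; apply/ho => //.
    by rewrite (dist_sym U x).
  + case: (dist_ultra U x x2 x1) => h; [right; apply/ho => //|left; apply/ho].
    by rewrite (dist_sym U x1).
exists z; apply: good_cons.
- by rewrite /Rpt /= (proj2 (dist_zero V _ _) erefl) (proj2 (dist_zero U _ _) erefl).
- move=> [x' y'] hq; rewrite /Rpt /=.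
  have e := hz _ (List.in_map snd _ _ hq); rewrite (hr _ _ hq) in e.
  by split=> //; rewrite dist_sym e dist_sym.
- exact: g.
Qed.

Lemma good_map_swap {X Y : Type} (R : X*Y -> X*Y -> Prop) (R' : Y*X -> Y*X -> Prop) L :
  (forall p q, R p q -> R' (swp p) (swp q)) -> good R L -> good R' (List.map swp L).
Proof.
move=> h g p' q' /List.in_map_iff [p [<- hp]] /List.in_map_iff [q [<- hq]].
exact: h (g _ _ hp hq).
Qed.

Lemma Rord_swap (U V : tsu) p q : @Rord U V p q <-> @Rord V U (swp p) (swp q).
Proof.
case: p q => [a b] [a' b']; rewrite /Rord /swp /=; tauto.
Qed.

Lemma stage1 (U V : tsu) : count_type (dst U) -> count_type (dst V) ->
  OEXT U -> OEXT V -> forall L0, good (@Rord U V) L0 ->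
  exists psi, bijective psi /\ order_emb U V psi /\ psi (dzero U) = dzero V /\
    (forall a b, List.In (a,b) L0 -> psi a = b).
Proof.
move=> [eU heU] [eV heV] hU hV L0 g0.
have hback : forall L y, good (@Rord U V) L -> exists x, good (@Rord U V) ((x,y)::L).
  move=> L y g.
  have g' : good (@Rord V U) (List.map swp L).
    by apply: good_map_swap g => p q /Rord_swap.
  have [x hx] := ord_forth hU y g'.
  exists x; apply: (good_swap (R' := @Rord V U) (L := (x,y)::L)); last exact: hx.
  move=> p q /Rord_swap.
  by rewrite /swp /= -!surjective_pairing.
have [psi [bij [hR hL]]] := bf_main (@Rord_inj U V) (ord_forth hV) hback heU heV g0.
exists psi; split=> //; split; last split => //.
- by move=> a b; have [h _] := hR a b.
- by have [_ [_ [h _]]] := hR (dzero U) (dzero U); apply: h.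
Qed.

Lemma stage2 (U V : tsu) : count_type (pts U) -> count_type (pts V) ->
  PEXT U -> PEXT V -> forall psi, bijective psi -> order_emb U V psi ->
  psi (dzero U) = dzero V ->
  forall L0, good (Rpt psi) L0 ->
  exists phi, bijective phi /\ (forall x x', dist V (phi x) (phi x') = psi (dist U x x')) /\
    (forall x y, List.In (x,y) L0 -> phi x = y).
Proof.
move=> [eU heU] [eV heV] hU hV psi [g c1 c2] ho h0 L0 g0.
have hog : order_emb V U g.
  by move=> a b; rewrite (ho (g a) (g b)) !c2.
have hg0 : g (dzero V) = dzero U by rewrite -h0 c1.
have hback : forall L y, good (Rpt psi) L -> exists x, good (Rpt psi) ((x,y)::L).
  move=> L y gd.
  have g' : good (Rpt g) (List.map swp L).
    apply: good_map_swap gd => -[x y1] [x' y1']; rewrite /Rpt /swp /= => ->.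
    by rewrite c1.
  have [x hx] := pt_forth hog hg0 hU y g'.
  exists x; apply: (good_swap (R' := Rpt g) (L := (x,y)::L)); last exact: hx.
  move=> -[x1 y1] [x1' y1'].
  by rewrite /Rpt /swp /= => ->; rewrite c2.
have [phi [bij [hR hL]]] := bf_main (Rpt_inj ho h0) (pt_forth ho h0 hV) hback heU heV g0.
by exists phi; split=> //; split.
Qed.

Lemma ext_main (U V : tsu) : countable_tsu U -> countable_tsu V ->
  OEXT U -> OEXT V -> PEXT U -> PEXT V ->
  forall (Ld : list (dst U * dst V)) (Lp : list (pts U * pts V)),
  good (@Rord U V) Ld ->
  (forall p q, List.In p Lp -> List.In q Lp -> List.In (dist U p.1 q.1, dist V p.2 q.2) Ld) ->
  exists phi psi, dc_iso U V phi psi /\ (forall x y, List.In (x,y) Lp -> phi x = y) /\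
     (forall a b, List.In (a,b) Ld -> psi a = b).
Proof.
move=> [cpU cdU] [cpV cdV] oU oV pU pV Ld Lp gd hLp.
have [psi [bpsi [hopsi [h0 hLd]]]] := stage1 cdU cdV oU oV gd.
have gp : good (Rpt psi) Lp.
  by move=> p q hp hq; rewrite /Rpt (hLd _ _ (hLp _ _ hp hq)).
have [phi [bphi [hd hLp']]] := stage2 cpU cpV pU pV bpsi hopsi h0 gp.
exists phi, psi; split; last by split.
split; last by split.
split; first by move=> x x1 e; apply: (bij_inj bphi).
by split.
Qed.

Lemma emb_main (B V : tsu) : finite_tsu B -> OEXT V -> PEXT V ->
  forall (Ld : list (dst B * dst V)) (Lp : list (pts B * pts V)),
  good (@Rord B V) Ld ->
  (forall p q, List.In p Lp -> List.In q Lp -> List.In (dist B p.1 q.1, dist V p.2 q.2) Ld) ->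
  exists f h, dc_emb B V f h /\ (forall x y, List.In (x,y) Lp -> f x = y) /\
     (forall a b, List.In (a,b) Ld -> h a = b).
Proof.
move=> [[lp cp] [ld cd]] oV pV Ld Lp gd hLp.
have [h [hR hLd]] := fo_main (@Rord_inj B V) (ord_forth oV) cd gd.
have ho : order_emb B V h by move=> a b; have [e _] := hR a b.
have h0 : h (dzero B) = dzero V by have [_ [_ [e _]]] := hR (dzero B) (dzero B); apply: e.
have gp : good (Rpt h) Lp.
  by move=> p q hp hq; rewrite /Rpt (hLd _ _ (hLp _ _ hp hq)).
have [f [hf hLp']] := fo_main (Rpt_inj ho h0) (pt_forth ho h0 pV) cp gp.
exists f, h; split; last by split.
split; last by split.
move=> x x' e; have := hf x x'; rewrite /Rpt /= e (proj2 (dist_zero V _ _) erefl) -h0.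
by move=> /esym /(oemb_inj ho) /(dist_zero B).
Qed.

Lemma sig_eq {T : Type} (P : T -> Prop) (a b : {x | P x}) : sval a = sval b -> a = b.
Proof. case: a b => a ha [b hb] /= e; subst b; by rewrite (proof_irrelevance _ ha hb). Qed.

Lemma fin_sig {T : Type} (P : T -> Prop) : fin_pred P -> Defs.fin_type {x | P x}.
Proof.
case=> l hl.
exists (List.flat_map (fun x => match excluded_middle_informative (P x) with
   | left p => [:: exist P x p] | right _ => [::] end) l).
move=> [x px]; apply/List.in_flat_map; exists x; split; first exact: hl.
case: excluded_middle_informative => [p|]; last by [].
by left; apply: sig_eq.
Qed.

Lemma fin_option {T : Type} : Defs.fin_type T -> Defs.fin_type (option T).
Proof.
case=> l hl; exists (None :: List.map Some l) => -[x|]; last by left.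
by right; apply: List.in_map.
Qed.

Definition einv {A T : Type} (h : A -> T) (k : A -> T) (e : T) : T :=
  match excluded_middle_informative (exists a, h a = e) with
  | left H => k (proj1_sig (cid H)) | right _ => e end.

Lemma einvP {A T : Type} (h : A -> T) (k : A -> T) :
  (forall a a', h a = h a' -> a = a') -> forall a, einv h k (h a) = k a.
Proof.
move=> hi a; rewrite /einv; case: excluded_middle_informative => [H|H]; last first.
  by exfalso; apply: H; exists a.
by congr k; apply: hi; exact: (proj2_sig (cid H)).
Qed.

Section Restr.
Variables (X : tsu) (es : list (dst X)) (h0 : List.In (dzero X) es).
Variables (T : Type) (dd : T -> T -> dst X) (hin : forall x y, List.In (dd x y) es).
Hypotheses (dsym : forall x y, dd x y = dd y x)
  (dzero_iff : forall x y, dd x y = dzero X <-> x = y)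
  (dultra : forall x y z, dle X (dd x z) (dd x y) \/ dle X (dd x z) (dd y z)).

Definition RD := {a : dst X | List.In a es}.
Definition rle (a b : RD) := dle X (sval a) (sval b).
Definition r0 : RD := exist _ (dzero X) h0.
Definition rdist (x y : T) : RD := exist _ (dd x y) (hin x y).

Lemma rle_refl a : rle a a. Proof. exact: dle_refl. Qed.
Lemma rle_anti a b : rle a b -> rle b a -> a = b.
Proof. by move=> h1 h2; apply: sig_eq; apply: dle_antisym. Qed.
Lemma rle_trans a b c : rle a b -> rle b c -> rle a c.
Proof. exact: dle_trans. Qed.
Lemma rle_total a b : rle a b \/ rle b a.
Proof. exact: dle_total. Qed.
Lemma r0_least a : rle r0 a.
Proof. exact: dzero_least. Qed.
Lemma rdist_sym x y : rdist x y = rdist y x.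
Proof. by apply: sig_eq => /=. Qed.
Lemma rdist_zero x y : rdist x y = r0 <-> x = y.
Proof.
split=> [e|e]; first by apply/dzero_iff; exact: (f_equal sval e).
by apply: sig_eq => /=; apply/dzero_iff.
Qed.
Lemma rdist_ultra x y z : rle (rdist x z) (rdist x y) \/ rle (rdist x z) (rdist y z).
Proof. exact: dultra. Qed.

Definition restr_tsu : tsu :=
  @TSU T RD rle r0 rdist rle_refl rle_anti rle_trans rle_total r0_least
    rdist_sym rdist_zero rdist_ultra.
End Restr.

Lemma restr_finite X es h0 T dd hin dsym dz du :
  Defs.fin_type T -> finite_tsu (@restr_tsu X es h0 T dd hin dsym dz du).
Proof.
move=> fT; split=> //=; apply: fin_sig; exists es => x h; exact: h.
Qed.

Definition close (X : tsu) (ps : list (pts X)) (es0 : list (dst X)) : list (dst X) :=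
  dzero X :: List.app es0 (List.flat_map (fun p => List.map (fun q => dist X p q) ps) ps).

Lemma close0 X ps es0 : List.In (dzero X) (close ps es0).
Proof. by left. Qed.
Lemma close_es X ps es0 a : List.In a es0 -> List.In a (@close X ps es0).
Proof. by move=> h; right; apply: List.in_or_app; left. Qed.
Lemma close_dist X ps es0 p q : List.In p ps -> List.In q ps ->
  List.In (dist X p q) (close ps es0).
Proof.
move=> hp hq; right; apply: List.in_or_app; right; apply/List.in_flat_map.
by exists p; split=> //; apply: List.in_map.
Qed.
Lemma close_inv X ps es0 a : List.In a (@close X ps es0) ->
  a = dzero X \/ List.In a es0 \/ exists p q, List.In p ps /\ List.In q ps /\ a = dist X p q.
Proof.
case=> [<-|/List.in_app_iff [h|/List.in_flat_map [p [hp /List.in_map_iff [q [<- hq]]]]]].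
- by left.
- by right; left.
- by right; right; exists p, q.
Qed.

Section Sub.
Variables (X : tsu) (ps : list (pts X)) (es0 : list (dst X)).
Definition SP := {x : pts X | List.In x ps}.
Definition sdd (x y : SP) := dist X (sval x) (sval y).
Lemma sdd_in x y : List.In (sdd x y) (close ps es0).
Proof. by apply: close_dist; [exact: (proj2_sig x)|exact: (proj2_sig y)]. Qed.
Lemma sdd_sym x y : sdd x y = sdd y x. Proof. exact: dist_sym. Qed.
Lemma sdd_zero x y : sdd x y = dzero X <-> x = y.
Proof.
split=> [e|->]; last exact/(dist_zero X).
by apply: sig_eq; apply/(dist_zero X).
Qed.
Lemma sdd_ultra x y z : dle X (sdd x z) (sdd x y) \/ dle X (sdd x z) (sdd y z).
Proof. exact: dist_ultra. Qed.
Definition subtsu : tsu :=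
  @restr_tsu X (close ps es0) (close0 ps es0) SP sdd sdd_in sdd_sym sdd_zero sdd_ultra.
Lemma subtsu_finite : finite_tsu subtsu.
Proof. apply: restr_finite; apply: fin_sig; by exists ps. Qed.
End Sub.

Lemma emb_sub (B X : tsu) f h ps es0 (hf : forall x, List.In (f x) ps)
  (hh : forall a, List.In (h a) (close ps es0)) :
  dc_emb B X f h ->
  dc_emb B (subtsu ps es0) (fun x => exist _ (f x) (hf x)) (fun a => exist _ (h a) (hh a)).
Proof.
move=> [fi [ho [h0 hd]]]; split; last split; last split.
- by move=> x x' e; apply: fi; exact: (f_equal sval e).
- by move=> a b; rewrite (ho a b).
- by apply: sig_eq => /=.
- by move=> x x1; apply: sig_eq; rewrite /= /sdd /= hd.
Qed.

Section BOrd.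
Variables (U : tsu) (es : list (dst U)) (c : dst U -> Prop) (h0 : List.In (dzero U) es)
  (hc0 : c (dzero U))
  (hcons : forall a a', List.In a es -> List.In a' es -> dle U a' a -> c a -> c a').
Definition OD := option {a : dst U | List.In a es}.
Definition ole (x y : OD) : Prop :=
  match x, y with
  | None, None => True | None, Some b => ~ c (sval b)
  | Some a, None => c (sval a) | Some a, Some b => dle U (sval a) (sval b) end.
Definition od0 : OD := Some (exist _ (dzero U) h0).
Lemma ole_refl x : ole x x.
Proof. by case: x => //= a; apply: dle_refl. Qed.
Lemma ole_anti x y : ole x y -> ole y x -> x = y.
Proof.
case: x y => [a|] [b|] //= h1 h2; try by exfalso; tauto.
by congr Some; apply: sig_eq; apply: dle_antisym.
Qed.
Lemma ole_trans x y z : ole x y -> ole y z -> ole x z.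
Proof.
case: x y z => [a|] [b|] [d|] //= h1 h2;
 first [ exact: dle_trans h1 h2
       | exact: hcons (proj2_sig b) (proj2_sig a) h1 h2
       | by move=> hd; apply: h1; exact: hcons (proj2_sig d) (proj2_sig b) h2 hd
       | by exfalso; tauto
       | idtac ].
case: (dle_total U (sval a) (sval d)) => // h; exfalso; apply: h2.
exact: hcons (proj2_sig a) (proj2_sig d) h h1.
Qed.
Lemma ole_total x y : ole x y \/ ole y x.
Proof.
case: x y => [a|] [b|] /=; [exact: dle_total| | |by left].
- by case: (classic (c (sval a))); [left|right].
- by case: (classic (c (sval b))); [right|left].
Qed.
Lemma od0_least x : ole od0 x.
Proof. by case: x => [a|] /=; [apply: dzero_least|]. Qed.
Definition edist (x y : Empty_set) : OD := match x with end.
Lemma edist_sym x y : edist x y = edist y x. Proof. by case: x. Qed.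
Lemma edist_zero x y : edist x y = od0 <-> x = y. Proof. by case: x. Qed.
Lemma edist_ultra x y z : ole (edist x z) (edist x y) \/ ole (edist x z) (edist y z).
Proof. by case: x. Qed.
Definition B_ord : tsu := @TSU Empty_set OD ole od0 edist ole_refl ole_anti ole_trans
  ole_total od0_least edist_sym edist_zero edist_ultra.
Lemma B_ord_finite : finite_tsu B_ord.
Proof.
split; first by exists [::] => -[].
apply: fin_option; apply: fin_sig; by exists es.
Qed.
End BOrd.

Lemma oext_fraisse (U : tsu) : (forall B, finite_tsu B -> dc_embeds B U) ->
  dc_homogeneous U -> OEXT U.
Proof.
move=> univ hom es c h0 hc0 hcons.
have [f [h [fi [ho [hz hd]]]]] := univ _ (B_ord_finite h0 hc0 hcons).
have [lS cS] : Defs.fin_type {a | List.In a es} by apply: fin_sig; exists es.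
pose g := einv (fun a => h (Some a)) (fun a => sval a).
have hinj : forall a a', h (Some a) = h (Some a') -> a = a'.
  by move=> a a' /(oemb_inj ho) [].
have gP : forall a, g (h (Some a)) = sval a by move=> a; rewrite /g einvP.
have g0 : g (dzero U) = dzero U.
  by have := gP (exist (fun a => List.In a es) _ h0); rewrite [h _]hz.
pose E e := exists a, e = h (Some a).
have [phi [psi [[[_ [hops _]] _] [_ hpsi]]]] :
  exists phi psi, dc_iso U U phi psi /\ (forall x, False -> phi x = x) /\
     (forall a, E a -> psi a = g a).
  apply: (hom (fun _ => False) E (fun _ => False) (fun e => List.In e es) (fun x => x) g).
  - split; last split.
    + by split=> //; exists (exist (fun a => List.In a es) _ h0); rewrite [h _]hz.
    + by exists [::].
    + exists (List.map (fun a => h (Some a)) lS) => e [a ->]; exact: List.in_map.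
  - split; last split.
    + by split.
    + by exists [::].
    + by exists es.
  - split=> //; split=> //; split=> //; split; last split; last split; last split => //.
    + by move=> e [a ->]; rewrite gP; exact: (proj2_sig a).
    + by move=> b hb; exists (h (Some (exist (fun a => List.In a es) b hb))); split; [exists (exist (fun a => List.In a es) b hb)|rewrite gP].
    + by move=> a b [s ->] [t ->]; rewrite !gP -ho.
exists (psi (h None)) => a ha.
have e : psi (h (Some (exist (fun a => List.In a es) a ha))) = a by rewrite hpsi ?gP //; eexists.
split.
- by rewrite -[X in dle U X _]e -hops -ho.
- by rewrite -[X in dle U _ X]e -hops -ho.
Qed.

Section BPt.
Variables (U : tsu) (ys : list (pts U)) (r : pts U -> dst U).
Hypothesis hr : forall y, List.In y ys -> r y <> dzero U.
Hypothesis hc : forall y y', List.In y ys -> List.In y' ys ->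
     (dle U (dist U y y') (r y) \/ dle U (dist U y y') (r y')) /\
     (dle U (r y) (dist U y y') \/ dle U (r y) (r y')).
Definition pes := close ys (List.map r ys).
Definition SY := {y | List.In y ys}.
Definition pdd (x y : option SY) : dst U :=
  match x, y with
  | Some a, Some b => dist U (sval a) (sval b)
  | None, Some b => r (sval b) | Some a, None => r (sval a)
  | None, None => dzero U end.
Lemma pdd_in x y : List.In (pdd x y) pes.
Proof.
case: x y => [a|] [b|] /=.
- apply: close_dist; [exact: (proj2_sig a)|exact: (proj2_sig b)].
- apply: close_es; apply: List.in_map; exact: (proj2_sig a).
- apply: close_es; apply: List.in_map; exact: (proj2_sig b).
- exact: close0.
Qed.
Lemma pdd_sym x y : pdd x y = pdd y x.
Proof. by case: x y => [a|] [b|] //=; rewrite dist_sym. Qed.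
Lemma pdd_zero x y : pdd x y = dzero U <-> x = y.
Proof.
case: x y => [a|] [b|] /=.
- split=> [e|[<-]]; last exact/(dist_zero U).
  by congr Some; apply: sig_eq; apply/(dist_zero U).
- by split=> // e; exfalso; apply: (hr (proj2_sig a)).
- by split=> // e; exfalso; apply: (hr (proj2_sig b)).
- by split.
Qed.
Lemma pdd_ultra x y z : dle U (pdd x z) (pdd x y) \/ dle U (pdd x z) (pdd y z).
Proof.
case: x y z => [a|] [b|] [d|] /=.
- exact: dist_ultra.
- exact: (proj2 (hc (proj2_sig a) (proj2_sig b))).
- exact: (proj1 (hc (proj2_sig a) (proj2_sig d))).
- by left; apply: dle_refl.
- have [_ h] := hc (proj2_sig d) (proj2_sig b).
  by case: h => h; [right; rewrite dist_sym|left].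
- by left; apply: dzero_least.
- by right; apply: dle_refl.
- by left; apply: dle_refl.
Qed.
Definition B_pt : tsu :=
  @restr_tsu U pes (close0 _ _) (option SY) pdd pdd_in pdd_sym pdd_zero pdd_ultra.
Lemma B_pt_finite : finite_tsu B_pt.
Proof. apply: restr_finite; apply: fin_option; apply: fin_sig; by exists ys. Qed.
End BPt.

Lemma pext_fraisse (U : tsu) : (forall B, finite_tsu B -> dc_embeds B U) ->
  dc_homogeneous U -> PEXT U.
Proof.
move=> univ hom ys r hr hc.
pose B := B_pt hr hc.
have [f [h [fi [ho [hz hd]]]]] := univ B (B_pt_finite hr hc).
have [lS cS] : Defs.fin_type (SY ys) by apply: fin_sig; exists ys.
have [lD cD] : Defs.fin_type (dst B) by apply: fin_sig; exists (pes ys r).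
pose fpt := einv (fun s : SY ys => f (Some s)) (fun s => sval s).
have fP : forall s, fpt (f (Some s)) = sval s.
  by move=> s; rewrite /fpt einvP // => a a' /fi [].
pose g := einv h (fun a => sval a).
have gP : forall a, g (h a) = sval a.
  by move=> a; rewrite /g einvP // => a1 a2 /(oemb_inj ho).
have g0 : g (dzero U) = dzero U by have := gP (dzero B); rewrite hz.
pose P p := exists s, p = f (Some s).
pose E e := exists a, e = h a.
have [phi [psi [[[_ [_ [_ hops]]] _] [hphi hpsi]]]] :
  exists phi psi, dc_iso U U phi psi /\ (forall x, P x -> phi x = fpt x) /\
     (forall a, E a -> psi a = g a).
  apply: (hom P E (fun y => List.In y ys) (fun e => List.In e (pes ys r)) fpt g).
  - split; last split.
    + split; first by exists (dzero B); rewrite hz.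
      by move=> x y [s ->] [t ->]; exists (dist B (Some s) (Some t)); rewrite hd.
    + exists (List.map (fun s => f (Some s)) lS) => e [a ->]; exact: List.in_map.
    + exists (List.map h lD) => e [a ->]; exact: List.in_map.
  - split; last split.
    + split; first exact: close0.
      by move=> x y hx hy; apply: close_dist.
    + by exists ys.
    + by exists (pes ys r).
  - split; last split; last split; last split; last split; last split; last split.
    + by move=> x [s ->]; rewrite fP; exact: (proj2_sig s).
    + by move=> x x' [s ->] [t ->]; rewrite !fP => e; rewrite (sig_eq e).
    + move=> y hy; exists (f (Some (exist (fun y => List.In y ys) y hy))).
      by split; [eexists|rewrite fP].
    + by move=> e [a ->]; rewrite gP; exact: (proj2_sig a).
    + move=> b hb; exists (h (exist (fun a => List.In a (pes ys r)) b hb)).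
      by split; [eexists|rewrite gP].
    + by move=> a b [s ->] [t ->]; rewrite !gP -ho.
    + exact: g0.
    + by move=> x x' [s ->] [t ->]; rewrite !fP hd gP.
exists (phi (f None)) => y hy.
pose s := exist (fun y => List.In y ys) y hy.
have e : phi (f (Some s)) = y by rewrite hphi ?fP //; exists s.
rewrite -[X in dist U _ X]e hops hd hpsi; last by eexists.
by rewrite gP.
Qed.

Lemma In_mem {T : eqType} (x : T) (s : seq T) : List.In x s <-> x \in s.
Proof.
elim: s => [|y s IH] //=; rewrite in_cons; split.
- by case=> [->|/IH ->]; rewrite ?eqxx ?orbT.
- by case/orP=> [/eqP ->|/IH]; [left|right].
Qed.

Definition pb (P : Prop) : bool := if excluded_middle_informative P then true else false.
Lemma pbP (P : Prop) : pb P <-> P.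
Proof. by rewrite /pb; case: excluded_middle_informative. Qed.

Section RatLists.
Local Open Scope ring_scope.
Lemma fmax_ub (s : seq rat) x0 x : x \in s -> x <= foldr Num.max x0 s.
Proof.
elim: s => [|y s IH] //=; rewrite in_cons le_max => /orP [/eqP ->|/IH ->];
  by rewrite ?lexx ?orbT.
Qed.
Lemma fmax_ge0 (s : seq rat) x0 : x0 <= foldr Num.max x0 s.
Proof. by elim: s => [|y s IH] /=; rewrite ?lexx // le_max IH orbT. Qed.
Lemma fmax_in (s : seq rat) x0 : foldr Num.max x0 s \in x0 :: s.
Proof.
elim: s => [|y s IH] /=; first by rewrite mem_head.
rewrite maxEle; case: ifP => _; last by rewrite !in_cons eqxx orbT.
by move: IH; rewrite !in_cons => /orP [->|->]; rewrite ?orbT.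
Qed.
Lemma fmin_lb (s : seq rat) x0 x : x \in s -> foldr Num.min x0 s <= x.
Proof.
elim: s => [|y s IH] //=; rewrite in_cons ge_min => /orP [/eqP ->|/IH ->];
  by rewrite ?lexx ?orbT.
Qed.
Lemma fmin_in (s : seq rat) x0 : foldr Num.min x0 s \in x0 :: s.
Proof.
elim: s => [|y s IH] /=; first by rewrite mem_head.
rewrite minEle; case: ifP => _; first by rewrite !in_cons eqxx orbT.
by move: IH; rewrite !in_cons => /orP [->|->]; rewrite ?orbT.
Qed.
End RatLists.

Lemma oext_qnn (Y : Type) (d : Y -> Y -> rat) (H : rum_axioms d) : OEXT (tsu_of_rum H).
Proof.
move=> es c h0 hc0 hcons /=.
pose lo := [seq sval a | a <- es & pb (c a)].
pose hi := [seq sval a | a <- es & ~~ pb (c a)].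
pose m := foldr Num.max 0%R lo.
pose M := foldr Num.min (m + 2)%R hi.
have m0 : (0 <= m)%R by exact: fmax_ge0.
have ha : forall a, List.In a es -> c a -> (sval a <= m)%R.
  move=> a /In_mem hin hca; apply: fmax_ub; apply/mapP; exists a => //.
  by rewrite mem_filter hin andbT; apply/pbP.
have hb : forall a, List.In a es -> ~ c a -> (m < sval a)%R.
  move=> a hin hca; have := fmax_in lo 0%R; rewrite -/m in_cons => /orP [/eqP e|].
  - rewrite e ltNge; apply/negP => hle; apply: hca.
    by apply: (hcons qnn0) => //; rewrite /= /qnn_le /=.
  - move=> /mapP [l]; rewrite mem_filter => /andP [/pbP hcl /In_mem hl] ->.
    rewrite ltNge; apply/negP => hle; apply: hca; exact: (hcons l).
have hc : forall a, List.In a es -> ~ c a -> (M <= sval a)%R.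
  move=> a /In_mem hin hca; apply: fmin_lb; apply/mapP; exists a => //.
  by rewrite mem_filter hin andbT; apply/negP => /pbP.
have mM : (m < M)%R.
  have := fmin_in hi (m + 2)%R; rewrite -/M in_cons => /orP [/eqP ->|]; first lra.
  move=> /mapP [l]; rewrite mem_filter => /andP [/negP hcl /In_mem hl] ->.
  by apply: hb => // /pbP.
have b0 : (0 <= (m + M) / 2)%R by lra.
exists (exist (fun q : rat => (0 <= q)%R) _ b0 : qnn) => a hin; rewrite /= /qnn_le /=.
case: (classic (c a)) => hca.
- have := ha _ hin hca; split; split=> // h; [|exfalso]; lra.
- have := hc _ hin hca; split; split=> // h; [exfalso|]; lra.
Qed.

Section PextUQ.
Local Open Scope ring_scope.
Variables (Y : Type) (d : Y -> Y -> rat) (H : rum_axioms d) (ys : list Y) (r : Y -> qnn).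
Hypothesis hr : forall y, List.In y ys -> r y <> qnn0.
Hypothesis hc : forall y y', List.In y ys -> List.In y' ys ->
     (qnn_le (rum_dist Y d H y y') (r y) \/ qnn_le (rum_dist Y d H y y') (r y')) /\
     (qnn_le (r y) (rum_dist Y d H y y') \/ qnn_le (r y) (r y')).
Definition SYQ := {y | List.In y ys}.
Definition dZ (x y : option SYQ) : rat :=
  match x, y with
  | Some a, Some b => d (sval a) (sval b)
  | None, Some b => sval (r (sval b)) | Some a, None => sval (r (sval a))
  | None, None => 0 end.
Lemma dZ_rum : rum_axioms dZ.
Proof.
split.
- case=> [a|] [b|] /=; rewrite ?lexx //; try exact: (proj2_sig (r _)).
  exact: (rum_ge0 H (sval a) (sval b)).
- by case=> [a|] [b|] //=; rewrite (rum_sym H).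
- case=> [a|] [b|] /=.
  + split=> [e|[<-]]; last exact/(rum_zero H).
    by congr Some; apply: sig_eq; apply/(rum_zero H).
  + split=> // e; exfalso; move: (hr (proj2_sig a)); apply; exact: sig_eq.
  + split=> // e; exfalso; move: (hr (proj2_sig b)); apply; exact: sig_eq.
  + by split.
- case=> [a|] [b|] [c|] /=; rewrite le_max; apply/orP.
  + have := rum_ultra H (sval a) (sval b) (sval c); rewrite le_max => /orP; tauto.
  + exact: (proj2 (hc (proj2_sig a) (proj2_sig b))).
  + exact: (proj1 (hc (proj2_sig a) (proj2_sig c))).
  + by left; rewrite lexx.
  + have [_ h] := hc (proj2_sig c) (proj2_sig b).
    by case: h => h; [right; rewrite (rum_sym H)|left].
  + by left; apply: (proj2_sig (r _)).
  + by right; rewrite lexx.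
  + by left; rewrite lexx.
Qed.
End PextUQ.

Lemma pext_UQ (Y : Type) (d : Y -> Y -> rat) (H : rum_axioms d) :
  is_UQ d -> PEXT (tsu_of_rum H).
Proof.
move=> [_ [_ [univ hom]]] ys r hr hc /=.
have HZ := dZ_rum hr hc.
have fZ : Defs.fin_type (option (SYQ ys)).
  by apply: fin_option; apply: fin_sig; exists ys.
have [f hf] := univ _ _ fZ HZ.
have finj : forall s t, f s = f t -> s = t.
  move=> s t e; apply/(rum_zero HZ); rewrite -hf e; exact/(rum_zero H).
pose fpt := einv (fun s : SYQ ys => f (Some s)) (fun s => sval s).
have fP : forall s, fpt (f (Some s)) = sval s.
  by move=> s; rewrite /fpt einvP // => a a' /finj [].
have [lS cS] : Defs.fin_type (SYQ ys) by apply: fin_sig; exists ys.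
pose P p := exists s, p = f (Some s).
have h1 : fin_pred P.
  exists (List.map (fun s => f (Some s)) lS) => e [a ->]; exact: List.in_map.
have h2 : fin_pred (fun y => List.In y ys) by exists ys.
have h3 : forall x, P x -> List.In (fpt x) ys.
  by move=> x [s ->]; rewrite fP; exact: (proj2_sig s).
have h4 : forall x x', P x -> P x' -> fpt x = fpt x' -> x = x'.
  by move=> x x' [s ->] [t ->]; rewrite !fP => e; rewrite (sig_eq e).
have h5 : forall y, List.In y ys -> exists x, P x /\ fpt x = y.
  move=> y hy; exists (f (Some (exist (fun y => List.In y ys) y hy))).
  by split; [eexists|rewrite fP].
have h6 : forall x x', P x -> P x' -> d (fpt x) (fpt x') = d x x'.
  by move=> x x' [s ->] [t ->]; rewrite !fP hf.
have [phi [_ [hphi hext]]] := hom P (fun y => List.In y ys) fpt h1 h2 h3 h4 h5 h6.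
exists (phi (f None)) => y hy; apply: sig_eq => /=.
pose s := exist (fun y => List.In y ys) y hy.
have e : phi (f (Some s)) = y by rewrite hext ?fP //; exists s.
by rewrite -[X in d _ X]e hphi hf.
Qed.

Section Concrete.
Local Open Scope ring_scope.

Definition lookup (s : seq (rat * nat)) (q : rat) : nat :=
  foldr (fun p acc => if p.1 == q then p.2 else acc) 0%N s.
Definition build (ks : seq rat) (h : rat -> nat) : seq (rat * nat) :=
  [seq (q, h q) | q <- sort <=%R (undup [seq q <- ks | (0 < q) && (h q != 0%N)])].
Definition keys (s : seq (rat*nat)) := [seq p.1 | p <- s].
Definition normW (s : seq (rat * nat)) := build (keys s) (lookup s).
Definition canon s := normW s == s.
Definition Pt := {s : seq (rat * nat) | canon s}.

Lemma lookup_map (l : seq rat) h q :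
  lookup [seq (q', h q') | q' <- l] q = if q \in l then h q else 0%N.
Proof.
elim: l => [|q' l IH] //=; rewrite in_cons IH.
by case: eqVneq => [->|ne] //=; rewrite ?eqxx.
Qed.

Lemma lookup_build ks h q :
  lookup (build ks h) q = if (q \in ks) && (0 < q) then h q else 0%N.
Proof.
rewrite /build lookup_map mem_sort mem_undup mem_filter.
case: (q \in ks); case: (0 < q) => //=; by case: eqP => // ->.
Qed.

Lemma lookup_nz s q : lookup s q != 0%N -> q \in keys s.
Proof.
elim: s => [|[q' n] s IH] //=; rewrite in_cons.
by case: (eqVneq q' q) => [_|ne] //= /IH ->; rewrite orbT.
Qed.

Lemma build_eq ks h ks' h' :
  (forall q, (0 < q) && (h q != 0%N) && (q \in ks) = (0 < q) && (h' q != 0%N) && (q \in ks')) ->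
  (forall q, 0 < q -> h q != 0%N -> q \in ks -> h q = h' q) ->
  build ks h = build ks' h'.
Proof.
move=> e1 e2; rewrite /build.
have -> : sort <=%R (undup [seq q <- ks | (0 < q) && (h q != 0%N)]) =
          sort <=%R (undup [seq q <- ks' | (0 < q) && (h' q != 0%N)]).
  apply/perm_sortP; [exact: le_total|exact: le_trans|exact: le_anti|].
  apply: uniq_perm; rewrite ?undup_uniq // => q.
  by rewrite !mem_undup !mem_filter e1.
apply/eq_in_map => q; rewrite mem_sort mem_undup mem_filter => /andP [/andP [q0 hq] qk].
have /andP [/andP [_ hq1] qk1] : (0 < q) && (h q != 0%N) && (q \in ks) by rewrite e1 q0 hq qk.
by rewrite /= e2.
Qed.

Lemma keys_build ks h : keys (build ks h) = sort <=%R (undup [seq q <- ks | (0 < q) && (h q != 0%N)]).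
Proof. by rewrite /keys /build -map_comp map_id. Qed.

Lemma canon_build ks h : canon (build ks h).
Proof.
apply/eqP; rewrite /normW; apply: build_eq => q.
- rewrite lookup_build keys_build mem_sort mem_undup mem_filter.
  by case: (q \in ks); case: (0 < q); rewrite /=; case: (h q != 0%N).
- rewrite lookup_build keys_build mem_sort mem_undup mem_filter => q0.
  by rewrite q0; case: (q \in ks); rewrite /= ?andbF.
Qed.

Definition mkPt ks h : Pt := exist _ (build ks h) (canon_build ks h).
Definition lk (x : Pt) := lookup (sval x).

Lemma lk_mk ks h q : lk (mkPt ks h) q = if (q \in ks) && (0 < q) then h q else 0%N.
Proof. exact: lookup_build. Qed.

Lemma lk_canon (x : Pt) q : lk x q = if (q \in keys (sval x)) && (0 < q) then lk x q else 0%N.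
Proof.
case: x => s hs0; have hs := eqP hs0; rewrite /lk /= -{1}hs /normW lookup_build.
by case: (_ && _).
Qed.

Lemma lk_pos (x : Pt) q : lk x q != 0%N -> 0 < q.
Proof. by rewrite lk_canon; case: (_ \in _); case: (0 < q). Qed.

Lemma lk_ext (x y : Pt) : (forall q, lk x q = lk y q) -> x = y.
Proof.
move=> e; apply: val_inj.
case: x y e => s hs0 [t ht0] /= e; have hs := eqP hs0; have ht := eqP ht0.
rewrite /lk /= in e.
rewrite -hs -ht /normW; apply: build_eq => q.
- case: (boolP (lookup s q != 0%N)) => hq; rewrite -e.
    by rewrite hq (lookup_nz hq); rewrite e in hq; rewrite (lookup_nz hq).
  by rewrite (negbTE hq) /= andbF.
- by move=> _ _ _; rewrite e.
Qed.

Definition dW (x y : Pt) : rat :=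
  foldr Num.max 0 [seq q <- keys (sval x) ++ keys (sval y) | lk x q != lk y q].

Lemma fmax_le (s : seq rat) x0 t : x0 <= t -> (forall q, q \in s -> q <= t) ->
  foldr Num.max x0 s <= t.
Proof.
move=> h0; elim: s => [|y s IH] //= hs; rewrite ge_max hs ?mem_head //= IH // => q hq.
by apply: hs; rewrite in_cons hq orbT.
Qed.

Lemma dW_ge0 x y : 0 <= dW x y.
Proof. exact: fmax_ge0. Qed.

Lemma dW_le x y t : 0 <= t -> (dW x y <= t <-> forall q, t < q -> lk x q = lk y q).
Proof.
move=> t0; split.
- move=> h q tq; apply/eqP; apply: contraT => ne.
  have hin : q \in [seq q <- keys (sval x) ++ keys (sval y) | lk x q != lk y q].
    rewrite mem_filter ne mem_cat /=.
    case: (boolP (lk x q != 0%N)) => [/lookup_nz -> //|/negPn/eqP hx].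
    by rewrite hx eq_sym in ne; rewrite (lookup_nz ne) orbT.
  have := fmax_ub 0 hin; rewrite -/(dW x y) => hq.
  by have := le_trans hq h; rewrite leNgt tq.
- move=> h; apply: fmax_le => // q; rewrite mem_filter => /andP [ne _].
  by rewrite leNgt; apply/negP => /h e; rewrite e eqxx in ne.
Qed.

Lemma dW_pos x y : 0 < dW x y -> lk x (dW x y) != lk y (dW x y).
Proof.
move=> h; have := fmax_in [seq q <- keys (sval x) ++ keys (sval y) | lk x q != lk y q] 0.
rewrite -/(dW x y) in_cons => /orP [/eqP e|]; first by rewrite e ltxx in h.
by rewrite mem_filter => /andP [].
Qed.

Lemma lk_modify (x : Pt) rho v : 0 < rho -> exists z : Pt,
  lk z rho = v /\ forall q, q != rho -> lk z q = lk x q.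
Proof.
move=> r0; exists (mkPt (rho :: keys (sval x)) (fun q => if q == rho then v else lk x q)).
split; first by rewrite lk_mk mem_head r0 eqxx.
move=> q ne; rewrite lk_mk (negbTE ne) in_cons (negbTE ne) /=.
case: (boolP (lk x q != 0%N)) => [hq|/negPn/eqP ->]; last by case: ifP.
by rewrite (lookup_nz hq) (lk_pos hq).
Qed.

Lemma dW_rum : rum_axioms dW.
Proof.
have sym : forall x y, dW x y <= dW y x.
  move=> x y; apply/(dW_le _ _ (dW_ge0 y x)) => q hq.
  by have := proj1 (dW_le y x (dW_ge0 y x)) (lexx _) q hq.
split.
- exact: dW_ge0.
- by move=> x y; apply/le_anti; rewrite !sym.
- move=> x y; split=> [e|<-].
  + apply: lk_ext => q; case: (ltrP 0 q) => q0.
      by apply: (proj1 (dW_le x y (lexx 0))); rewrite ?e.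
    case: (boolP (lk x q != 0%N)) => [/lk_pos|/negPn/eqP ->]; first by rewrite ltNge q0.
    case: (boolP (lk y q != 0%N)) => [/lk_pos|/negPn/eqP ->]; first by rewrite ltNge q0.
    by [].
  + by apply/le_anti; rewrite dW_ge0 andbT; apply/(dW_le _ _ (lexx 0)).
- move=> x y z; set t := Num.max _ _.
  have t0 : 0 <= t by rewrite le_max dW_ge0.
  apply/(dW_le _ _ t0) => q tq.
  have h1 : dW x y <= t by rewrite le_max lexx.
  have h2 : dW y z <= t by rewrite le_max lexx orbT.
  rewrite (proj1 (dW_le x y (dW_ge0 x y)) (lexx _) q (le_lt_trans h1 tq)).
  exact: (proj1 (dW_le y z (dW_ge0 y z)) (lexx _) q (le_lt_trans h2 tq)).
Qed.
End Concrete.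

Definition Wt := tsu_of_rum dW_rum.

Lemma argmin_list {T : Type} (s : list T) (f : T -> rat) : s <> [::] ->
  exists y, List.In y s /\ forall y', List.In y' s -> (f y <= f y')%R.
Proof.
elim: s => [//|a s IH] _.
case: s IH => [|b s] IH.
  by exists a; split; [left|move=> y' [<-|[]]; exact: lexx].
have [y [hy hm]] := IH ltac:(by []).
case: (lerP (f a) (f y)) => h.
- exists a; split; first by left.
  move=> y' [<-|h']; first exact: lexx.
  exact: le_trans h (hm _ h').
- exists y; split; first by right.
  move=> y' [<-|h']; [exact: ltW | exact: hm].
Qed.

Lemma fresh_nat (s : list Pt) rho : exists v, forall y, List.In y s -> lk y rho != v.
Proof.
exists (foldr (fun y acc => lk y rho + acc) 0 s).+1%N => y hy.
suff : (lk y rho <= foldr (fun y acc => lk y rho + acc) 0 s)%N.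
  by move=> h; apply/eqP => e; rewrite e ltnn in h.
elim: s hy => [|a s IH] //= [<-|h]; first exact: leq_addr.
by apply: leq_trans (IH h) _; exact: leq_addl.
Qed.

Lemma pext_W : PEXT Wt.
Proof.
move=> ys r hr hc.
case: ys hr hc => [|y0 ys'] hr hc.
  by exists (mkPt [::] (fun _ => 0%N)) => y [].
have [ym [hmin_in hmin]] := @argmin_list _ (y0 :: ys') (fun y => sval (r y)) ltac:(by []).
set rho := sval (r ym).
have rho0 : (0 < rho)%R.
  rewrite lt_def (proj2_sig (r ym)) andbT; apply/eqP => e.
  by apply: (hr _ hmin_in); apply: sig_eq.
have [v hv] := fresh_nat (y0 :: ys') rho.
have [z [hz1 hz2]] := lk_modify ym v rho0.
have agree : forall q, (rho < q)%R -> lk z q = lk ym q.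
  by move=> q h; apply: hz2; rewrite gt_eqF.
exists z => y hy; apply: sig_eq => /=.
set del := dW ym y.
have [hA _] := hc _ _ hmin_in hy.
have [_ hD] := hc _ _ hy hmin_in.
rewrite /= /qnn_le /= in hA hD.
rewrite (rum_sym dW_rum y ym) -/del in hD.
have ry : (rho <= sval (r y))%R := hmin y hy.
have hdel : forall q, (del < q)%R -> lk ym q = lk y q.
  exact: (proj1 (dW_le ym y (dW_ge0 ym y)) (lexx _)).
case: (lerP del rho) => hd.
- have -> : sval (r y) = rho.
    apply/le_anti; rewrite ry andbT.
    by case: hD => h //; apply: le_trans h hd.
  apply/le_anti/andP; split.
  + apply/(dW_le _ _ (ltW rho0)) => q hq.
    by rewrite agree // hdel //; apply: le_lt_trans hq.
  + rewrite leNgt; apply/negP => hlt.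
    have := proj1 (dW_le z y (dW_ge0 z y)) (lexx _) rho hlt.
    by rewrite hz1 => e; have := hv y hy; rewrite -e eqxx.
- have d0 : (0 < del)%R by apply: lt_trans hd.
  have -> : sval (r y) = del.
    apply/le_anti/andP; split.
    + case: hD => h //; apply: le_trans h (ltW hd).
    + by case: hA => h //; exfalso; move: h; rewrite leNgt hd.
  apply/le_anti/andP; split.
  + apply/(dW_le _ _ (ltW d0)) => q hq.
    rewrite agree; last exact: lt_trans hq.
    exact: hdel.
  + rewrite leNgt; apply/negP => hlt.
    have := proj1 (dW_le z y (dW_ge0 z y)) (lexx _) del hlt.
    rewrite hz2; last by rewrite gt_eqF.
    by move=> e; have := dW_pos d0; rewrite -/del e eqxx.
Qed.

Lemma filter_list {T : Type} (l : list T) (P : T -> Prop) :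
  exists l', forall x, List.In x l' <-> List.In x l /\ P x.
Proof.
elim: l => [|a l [l' hl']]; first by exists [::] => x; split=> // -[].
case: (classic (P a)) => ha.
- exists (a :: l') => x /=; rewrite hl'; split.
  + by case=> [<-|[h1 h2]]; [split; [left|]|split; [right|]].
  + by case=> [[<-|h1] h2]; [left|right].
- exists l' => x /=; rewrite hl'; split.
  + by case=> h1 h2; split; [right|].
  + by case=> [[<-|h1] h2] //; exfalso; apply: ha.
Qed.

Lemma Rord00 (U V : tsu) : good (@Rord U V) [:: (dzero U, dzero V)].
Proof.
move=> p q [<-|[]] [<-|[]]; rewrite /Rord /=.
by split; [|split]; split=> _ //; apply: dle_refl.
Qed.

Lemma univ_of_ext (V : tsu) : OEXT V -> PEXT V -> forall B, finite_tsu B -> dc_embeds B V.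
Proof.
move=> oV pV B fB.
have [f [h [e _]]] := @emb_main B V fB oV pV [:: (dzero B, dzero V)] [::] (@Rord00 B V)
  (fun p q hp => match hp with end).
by exists f, h.
Qed.

Lemma hom_of_ext (X : tsu) : countable_tsu X -> OEXT X -> PEXT X -> dc_homogeneous X.
Proof.
move=> cX oX pX P E Q F f g [[E0 hPE] [[lP cP] [lE cE]]] _ [h1 [h2 [h3 [h4 [h5 [h6 [h7 h8]]]]]]].
have [lE' hE'] := filter_list lE E.
have [lP' hP'] := filter_list lP P.
pose Ld := List.map (fun a => (a, g a)) lE'.
pose Lp := List.map (fun x => (x, f x)) lP'.
have inLd : forall p, List.In p Ld -> E p.1 /\ p.2 = g p.1.
  by move=> p /List.in_map_iff [a [<- /hE' [_ ha]]].
have gd : good (@Rord X X) Ld.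
  move=> p q /inLd [ep e1] /inLd [eq' e2]; rewrite /Rord e1 e2 /=; split; [|split].
  - exact: h6.
  - exact: h6.
  - split=> [->|e]; first exact: h7.
    apply/le0; apply/(h6 _ _ ep E0); rewrite e h7; exact: dle_refl.
have hLp : forall p q, List.In p Lp -> List.In q Lp ->
    List.In (dist X p.1 q.1, dist X p.2 q.2) Ld.
  move=> p q /List.in_map_iff [x [<- /hP' [_ hx]]] /List.in_map_iff [y [<- /hP' [_ hy]]] /=.
  rewrite h8 //; apply: (List.in_map (fun a => (a, g a))); apply/hE'; split; last exact: hPE.
  exact: cE (hPE _ _ hx hy).
have [phi [psi [iso [e1 e2]]]] := ext_main cX cX oX oX pX pX gd hLp.
exists phi, psi; split=> //; split.
- move=> x hx; apply: e1; apply: (List.in_map (fun x => (x, f x))); apply/hP'; split=> //.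
  exact: cP.
- move=> a ha; apply: e2; apply: (List.in_map (fun a => (a, g a))); apply/hE'; split=> //.
  exact: cE.
Qed.

Lemma isohom_of_ext (X : tsu) : count_type (pts X) -> PEXT X -> iso_homogeneous X.
Proof.
move=> cX pX P Q E f [[E0 hPE] [[lP cP] _]] _ [h1 [h2 [h3 [h4 [h5 [h6 [h7 h8]]]]]]].
have [lP' hP'] := filter_list lP P.
pose Lp := List.map (fun x => (x, f x)) lP'.
have gp : good (Rpt (fun a => a)) Lp.
  move=> p q /List.in_map_iff [x [<- /hP' [_ hx]]] /List.in_map_iff [y [<- /hP' [_ hy]]].
  by rewrite /Rpt /= h8.
have bid : bijective (fun a : dst X => a) by exists (fun a => a).
have [phi [bphi [hd hL]]] := stage2 cX cX pX pX bid (fun a b => iff_refl _) erefl gp.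
exists phi; split.
- split; last by split.
  split; first by move=> x y e; apply: (bij_inj bphi).
  by split=> //; split.
- move=> x hx; apply: hL; apply: (List.in_map (fun x => (x, f x))); apply/hP'; split=> //.
  exact: cP.
Qed.

Lemma inj_surj_bij {A B : Type} (f : A -> B) :
  (forall a a', f a = f a' -> a = a') -> (forall b, exists a, f a = b) -> bijective f.
Proof.
move=> hi hs; exists (fun b => proj1_sig (cid (hs b))).
- by move=> a; apply: hi; exact: (proj2_sig (cid (hs (f a)))).
- by move=> b; exact: (proj2_sig (cid (hs b))).
Qed.

Lemma iso_sub (A X : tsu) f g (lA : list (pts A)) (lD : list (dst A))
  (cA : forall x, List.In x lA) (cD : forall a, List.In a lD) :
  dc_emb A X f g -> dc_isomorphic A (subtsu (List.map f lA) (List.map g lD)).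
Proof.
move=> he.
have hf : forall x, List.In (f x) (List.map f lA) by move=> x; apply: List.in_map.
have hg : forall a, List.In (g a) (close (List.map f lA) (List.map g lD)).
  by move=> a; apply: close_es; apply: List.in_map.
have he' := emb_sub hf hg he.
exists (fun x => exist _ (f x) (hf x)), (fun a => exist _ (g a) (hg a)); split=> //.
case: he => [fi [ho [h0 hd]]].
split; apply: inj_surj_bij.
- by move=> x x' e; apply: fi; exact: (f_equal sval e).
- move=> [p hp]; have [x [e _]] := proj1 (List.in_map_iff _ _ _) hp.
  by exists x; apply: sig_eq => /=.
- by move=> a a' e; apply: (oemb_inj ho); exact: (f_equal sval e).
- move=> [e he0]; case: (close_inv he0) => [e0|[hin|[p [q [hp [hq ep]]]]]].
  + by exists (dzero A); apply: sig_eq => /=; rewrite h0 e0.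
  + have [a [ea _]] := proj1 (List.in_map_iff _ _ _) hin.
    by exists a; apply: sig_eq => /=.
  + have [x [ex _]] := proj1 (List.in_map_iff _ _ _) hp.
    have [y [ey _]] := proj1 (List.in_map_iff _ _ _) hq.
    by exists (dist A x y); apply: sig_eq => /=; rewrite ep -ex -ey hd.
Qed.

Section T0.
Definition t0le (a b : unit) := True.
Lemma t0_refl a : t0le a a. Proof. by []. Qed.
Lemma t0_anti a b : t0le a b -> t0le b a -> a = b. Proof. by case: a; case: b. Qed.
Lemma t0_trans a b c : t0le a b -> t0le b c -> t0le a c. Proof. by []. Qed.
Lemma t0_total a b : t0le a b \/ t0le b a. Proof. by left. Qed.
Lemma t0_least a : t0le tt a. Proof. by []. Qed.
Definition t0d (x y : unit) := tt.
Lemma t0_sym x y : t0d x y = t0d y x. Proof. by []. Qed.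
Lemma t0_zero x y : t0d x y = tt <-> x = y. Proof. by case: x; case: y. Qed.
Lemma t0_ultra x y z : t0le (t0d x z) (t0d x y) \/ t0le (t0d x z) (t0d y z). Proof. by left. Qed.
Definition T0 : tsu := @TSU unit unit t0le tt t0d t0_refl t0_anti t0_trans t0_total
  t0_least t0_sym t0_zero t0_ultra.
Lemma T0_finite : finite_tsu T0.
Proof. by split; exists [:: tt] => -[]; left. Qed.
End T0.

Lemma count_countType (T : countType) : count_type T.
Proof. by exists pickle; apply: (pcan_inj (@pickleK T)). Qed.

Lemma Wt_countable : countable_tsu Wt.
Proof. by split; apply: count_countType. Qed.

Lemma Wt_oext : OEXT Wt. Proof. exact: oext_qnn. Qed.

Lemma fin_pickle (T : countType) n : fin_pred (fun x : T => (pickle x < n)%N).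
Proof.
exists (pmap unpickle (iota 0 n)) => x hx; apply/In_mem.
by rewrite mem_pmap -(@pickleK T x); apply: map_f; rewrite mem_iota.
Qed.

Lemma Wt_fraisse : is_fraisse_limit Wt.
Proof.
split; first exact: Wt_countable.
split; last split.
- pose A n (x : pts Wt) := (pickle x < n)%N.
  pose E n (a : dst Wt) := (pickle a < n)%N \/ a = dzero Wt \/
     exists x y, A n x /\ A n y /\ a = dist Wt x y.
  exists A, E; split; last split; last split; last split.
  + move=> n; split; first split.
    * by right; left.
    * by move=> x y hx hy; right; right; exists x, y.
    * split; first exact: fin_pickle.
      have [l1 h1] : fin_pred (fun x : qnn => (pickle x < n)%N) by apply: fin_pickle.
      have [l2 h2] : fin_pred (fun x : Pt => (pickle x < n)%N) by apply: fin_pickle.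
      exists (List.app l1 (close (X := Wt) l2 [::])) => a [h|[->|[x [y [hx [hy ->]]]]]].
      -- by apply: List.in_or_app; left; apply: h1.
      -- by apply: List.in_or_app; right; apply: close0.
      -- by apply: List.in_or_app; right; apply: close_dist; [apply: h2|apply: h2].
  + by move=> n x; rewrite /A => h; apply: ltnW.
  + move=> n a [h|[h|[x [y [hx [hy h]]]]]]; [left; exact: ltnW|by right; left|].
    by right; right; exists x, y; split; [exact: ltnW|split; [exact: ltnW|]].
  + by move=> x; exists (pickle x).+1; rewrite /A.
  + by move=> a; exists (pickle a).+1; left.
- exact: univ_of_ext Wt_oext pext_W.
- exact: hom_of_ext Wt_countable Wt_oext pext_W.
Qed.

Definition sEnum (n : nat) : tsu :=
  match (unpickle n : option (seq Pt * seq qnn)) with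
  | Some p => @subtsu Wt p.1 p.2
  | None => T0 end.

Lemma sEnum_finite n : finite_tsu (sEnum n).
Proof. rewrite /sEnum; case: (unpickle n) => [p|]; [exact: subtsu_finite|exact: T0_finite]. Qed.

Lemma Wt_univ : forall B, finite_tsu B -> dc_embeds B Wt.
Proof. exact: univ_of_ext Wt_oext pext_W. Qed.

Lemma sEnum_all A : finite_tsu A -> exists n, dc_isomorphic A (sEnum n).
Proof.
move=> fA; have [f [g he]] := Wt_univ fA.
case: fA => [[lA cA] [lD cD]].
exists (pickle ((List.map f lA, List.map g lD) : seq Pt * seq qnn)).
rewrite /sEnum pickleK /=.
exact: iso_sub cA cD he.
Qed.

Lemma JEP_proof : JEP_fin.
Proof.
move=> A B fA fB.
have [fa [ga ea]] := Wt_univ fA.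
have [fb [gb eb]] := Wt_univ fB.
case: fA => [[lA cA] [lAd cAd]]; case: fB => [[lB cB] [lBd cBd]].
pose ps := List.app (List.map fa lA) (List.map fb lB).
pose es := List.app (List.map ga lAd) (List.map gb lBd).
exists (@subtsu Wt ps es); split; first exact: subtsu_finite.
split.
- have hf : forall x, List.In (fa x) ps by move=> x; apply: List.in_or_app; left; apply: List.in_map.
  have hg : forall a, List.In (ga a) (close ps es).
    by move=> a; apply: close_es; apply: List.in_or_app; left; apply: List.in_map.
  by eexists; eexists; apply: (emb_sub hf hg ea).
- have hf : forall x, List.In (fb x) ps by move=> x; apply: List.in_or_app; right; apply: List.in_map.
  have hg : forall a, List.In (gb a) (close ps es).
    by move=> a; apply: close_es; apply: List.in_or_app; right; apply: List.in_map.
  by eexists; eexists; apply: (emb_sub hf hg eb).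
Qed.

Lemma AP_proof : AP_fin.
Proof.
move=> A B C fA fB fC a1 g1 a2 g2 e1 e2.
have [c [hc ec]] := Wt_univ fC.
case: (fA) => [[lA cA] [lAd cAd]].
case: e1 => [i1 [o1 [z1 d1]]]; case: e2 => [i2 [o2 [z2 d2]]].
have ec' := ec; case: ec' => [ic [oc [zc dc]]].
pose Ld := List.map (fun a => (g1 a, hc (g2 a))) lAd.
pose Lp := List.map (fun x => (a1 x, c (a2 x))) lA.
have gd : good (@Rord B Wt) Ld.
  move=> p q /List.in_map_iff [a [<- _]] /List.in_map_iff [b [<- _]].
  have k : forall a b, dle B (g1 a) (g1 b) <-> dle Wt (hc (g2 a)) (hc (g2 b)).
    by move=> x y; rewrite -o1 (o2 x y) (oc (g2 x) (g2 y)).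
  have k0 : g1 a = dzero B <-> hc (g2 a) = dzero Wt.
    split=> e.
    + have ea : a = dzero A by apply: (oemb_inj o1); rewrite e z1.
      by rewrite ea z2 zc.
    + have ea : a = dzero A.
        by apply: (oemb_inj o2); apply: (oemb_inj oc); rewrite e z2 zc.
      by rewrite ea z1.
  by split; [exact: k|split; [exact: k|exact: k0]].
have hLp : forall p q, List.In p Lp -> List.In q Lp ->
    List.In (dist B p.1 q.1, dist Wt p.2 q.2) Ld.
  move=> p q /List.in_map_iff [x [<- _]] /List.in_map_iff [y [<- _]].
  rewrite (d1 x y) (dc (a2 x) (a2 y)) (d2 x y); exact: (List.in_map (fun a => (g1 a, hc (g2 a)))).
have [b [hb [eb [ep ed]]]] := emb_main fB Wt_oext pext_W gd hLp.
case: fB => [[lB cB] [lBd cBd]]; case: fC => [[lC cC] [lCd cCd]].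
pose ps := List.app (List.map b lB) (List.map c lC).
pose es := List.app (List.map hb lBd) (List.map hc lCd).
have hf1 : forall x, List.In (b x) ps by move=> x; apply: List.in_or_app; left; apply: List.in_map.
have hg1 : forall a, List.In (hb a) (close ps es).
  by move=> a; apply: close_es; apply: List.in_or_app; left; apply: List.in_map.
have hf2 : forall x, List.In (c x) ps by move=> x; apply: List.in_or_app; right; apply: List.in_map.
have hg2 : forall a, List.In (hc a) (close ps es).
  by move=> a; apply: close_es; apply: List.in_or_app; right; apply: List.in_map.
exists (@subtsu Wt ps es).
do 4 eexists; split; first exact: subtsu_finite.
split; first exact: (emb_sub hf1 hg1 eb).
split; first exact: (emb_sub hf2 hg2 ec).
split.
- move=> x; apply: sig_eq => /=; apply: ep.
  exact: (List.in_map (fun x => (a1 x, c (a2 x)))).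
- move=> d; apply: sig_eq => /=; apply: ed.
  exact: (List.in_map (fun a => (g1 a, hc (g2 a)))).
Qed.

Theorem theorem3p11 :
  (* U_fin is nonempty *)
  (exists A : tsu, finite_tsu A) /\
  (* only countably many dc-isomorphism types *)
  (exists s : nat -> tsu, (forall n, finite_tsu (s n)) /\
     forall A : tsu, finite_tsu A -> exists n, dc_isomorphic A (s n)) /\
  (* JEP and AP *)
  JEP_fin /\ AP_fin /\
  (* the Fraisse limit exists *)
  (exists U : tsu, is_fraisse_limit U) /\
  (* it is dc-isomorphic to U_Q viewed as a two-sorted space over Q_{>=0} *)
  (forall U : tsu, is_fraisse_limit U ->
     forall (Y : Type) (d : Y -> Y -> rat) (H : rum_axioms d),
       is_UQ d -> dc_isomorphic U (tsu_of_rum H)) /\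
  (* it is dc-homogeneous and iso-homogeneous *)
  (forall U : tsu, is_fraisse_limit U -> dc_homogeneous U /\ iso_homogeneous U).
Proof.
split; first by exists T0; exact: T0_finite.
split; first by exists sEnum; split; [exact: sEnum_finite|exact: sEnum_all].
split; first exact: JEP_proof.
split; first exact: AP_proof.
split; first by exists Wt; exact: Wt_fraisse.
split.
- move=> U [cU [_ [univ hom]]] Y d H hQ.
  have cV : countable_tsu (tsu_of_rum H).
    split; first by case: hQ => [_ [h _]].
    exact: count_countType.
  have [phi [psi [iso _]]] := @ext_main U (tsu_of_rum H) cU cV
    (oext_fraisse univ hom) (@oext_qnn Y d H) (pext_fraisse univ hom) (pext_UQ hQ)
    [:: (dzero U, dzero (tsu_of_rum H))] [::] (@Rord00 U (tsu_of_rum H))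
    (fun p q hp => match hp with end).
  by exists phi, psi.
- move=> U [[cU _] [_ [univ hom]]]; split=> //.
  exact: isohom_of_ext cU (pext_fraisse univ hom).
Qed.
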